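(* For all integers $k\ge1$ and $t\ge2$, $\Pr_{G\sim G(n,1/2)}[\theta^t(G)\not\models\mathrm{EA}^t_k]=\mathrm{negl}(n)$.
   Context: $G(n,1/2)$ is the uniform distribution over simple graphs on $[n]$. For a graph $G$, $\theta^t(G)$ is the $t$-hypergraph on $V(G)$ defined by the $\mathrm{FO}[\oplus]$ formula $\theta^t(x_1,\dots,x_t)=\oplus y\,\bigwedge_{i=1}^t E(y,x_i)$: a $t$-element set $\{v_1,\dots,v_t\}$ is a hyperedge iff the number of vertices $y$ adjacent to all of $v_1,\dots,v_t$ is odd. A $t$-hypergraph satisfies $\mathrm{EA}^t_k$ if for every vertex set $S$ of size $k$ and every $T\subseteq\binom{S}{t-1}$ there exists $v\notin S$ such that for every $\{s_1,\dots,s_{t-1}\}\in\binom{S}{t-1}$, $\{s_1,\dots,s_{t-1},v\}$ is a hyperedge iff $\{s_1,\dots,s_{t-1}\}\in T$. Negligible means eventually below $1/p(n)$ for every polynomial $p$. *)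

(* Defs.v *)
From mathcomp Require Import all_boot all_order all_algebra.
Set Implicit Arguments. Unset Strict Implicit. Unset Printing Implicit Defensive.
Import GRing.Theory Num.Theory.

(* A simple graph on [n] = 'I_n is represented by its edge set: a set of
   2-element subsets of 'I_n. *)
Definition is_graph (n : nat) (E : {set {set 'I_n}}) : bool :=
  [forall e in E, #|e| == 2].

(* The sample space of G(n,1/2): all simple graphs on 'I_n (uniform). *)
Definition graphs (n : nat) : {set {set {set 'I_n}}} :=
  [set E | is_graph E].

Definition adj (n : nat) (E : {set {set 'I_n}}) (y x : 'I_n) : bool :=
  [set y; x] \in E.

Definition theta (n t : nat) (E : {set {set 'I_n}}) : {set {set 'I_n}} :=
  [set S : {set 'I_n} | (#|S| == t) &&
     odd #|[set y : 'I_n | [forall x in S, adj E y x]]|].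

Definition binom_sets (n : nat) (S : {set 'I_n}) (m : nat) : {set {set 'I_n}} :=
  [set U in powerset S | #|U| == m].

Definition EA (n t k : nat) (H : {set {set 'I_n}}) : bool :=
  [forall S : {set 'I_n}, (#|S| == k) ==>
    [forall T : {set {set 'I_n}}, (T \subset binom_sets S t.-1) ==>
      [exists v : 'I_n, (v \notin S) &&
        [forall U in binom_sets S t.-1, ((v |: U) \in H) == (U \in T)]]]].

Definition fail_prob (t k n : nat) : rat :=
  (#|[set E in graphs n | ~~ @EA n t k (@theta n t E)]|%:R / #|graphs n|%:R)%R.

(* negligible: eventually below 1/p(n) for every polynomial p
   (that is eventually positive, so that 1/p(n) makes sense). *)
Definition negligible (f : nat -> rat) : Prop :=
  forall p : {poly rat},
    (exists N, forall n, (N <= n)%N -> (0 < p.[n%:R])%R) ->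
    exists N, forall n, (N <= n)%N -> (f n < (p.[n%:R])^-1)%R.

(* Main.v *)
Require Import Defs.
From mathcomp Require Import all_boot all_order all_algebra zify ring lra.
Set Implicit Arguments. Unset Strict Implicit. Unset Printing Implicit Defensive.
Import Order.TTheory GRing.Theory Num.Theory.

Section Counting.
Variable X : finType.

Lemma card_sep (A : {set {set X}}) (P : pred {set X}) :
  #|[set Y in A | P Y]| = \sum_(Y in A) (P Y : nat).
Proof.
rewrite -sum1_card big_mkcond /= [RHS]big_mkcond /=.
by apply: eq_bigr => Y _; rewrite inE; case: (Y \in A); case: (P Y).
Qed.

Lemma L_split (J W : {set X}) (P : pred {set X}) : W \subset J ->
  #|[set Y in powerset J | P Y]| =
  \sum_(R in powerset (J :\: W)) #|[set Y in powerset W | P (R :|: Y)]|.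
Proof.
move=> sWJ.
rewrite card_sep (partition_big (fun Y => Y :\: W) (mem (powerset (J :\: W)))) /=; last first.
  by move=> Y; rewrite !inE => sYJ; apply: setSD.
apply: eq_bigr => R; rewrite inE => sRJW.
rewrite card_sep.
have dRW : R :&: W = set0.
  apply/setP => x; rewrite !inE; apply/negP => /andP [xR xW].
  by move: (subsetP sRJW x xR); rewrite !inE xW.
rewrite (reindex_onto (fun Y => R :|: Y) (fun Y => Y :&: W)) /=; last first.
  move=> Y /andP [_ /eqP <-]; apply/setP => x; rewrite !inE.
  by case: (x \in W); case: (x \in Y).
apply: eq_bigl => Y; rewrite !inE.
case sYW: (Y \subset W); last first.
  apply/negbTE; apply/negP => /andP [_ /eqP E].
  by move: sYW; rewrite -E subsetIr.
have -> : (R :|: Y) :&: W == Y.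
  by rewrite setIUl dRW set0U; apply/eqP/setIidPl.
have -> : (R :|: Y) :\: W == R.
  apply/eqP/setP => x; rewrite !inE.
  case xW: (x \in W) => /=.
    by rewrite (_ : x \in R = false) //; apply/negP => xR; move: (subsetP sRJW x xR); rewrite !inE xW.
  by rewrite (_ : x \in Y = false) ?orbF //; apply/negP => xY; move: (subsetP sYW x xY); rewrite xW.
rewrite !andbT subUset; apply/andP; split; first exact: (subset_trans sRJW (subsetDl _ _)).
exact: subset_trans sYW sWJ.
Qed.

Local Open Scope ring_scope.

Lemma L_one (J W : {set X}) (P : pred {set X}) : W \subset J ->
  (forall R : {set X}, R \subset J :\: W -> exists Y : {set X}, (Y \subset W) && ~~ P (R :|: Y)) ->
  (#|[set Y in powerset J | P Y]|%:R : rat) <= (1 - (2 ^+ #|W|)^-1) * 2 ^+ #|J|.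
Proof.
move=> sWJ H; rewrite (L_split P sWJ).
have HJ : #|J| = (#|J :\: W| + #|W|)%N.
  by rewrite cardsD (setIidPr sWJ) subnK // subset_leq_card.
have le1 : forall R, R \in powerset (J :\: W) ->
    (#|[set Y in powerset W | P (R :|: Y)]| <= (2 ^ #|W|).-1)%N.
  move=> R; rewrite inE => /H [Y /andP [sYW nP]].
  rewrite -ltnS prednK ?expn_gt0 // -card_powerset.
  apply: proper_card; apply/properP; split.
    by apply/subsetP => Z; rewrite inE => /andP [].
  by exists Y; rewrite !inE ?sYW // (negbTE nP).
apply: (@le_trans _ _ ((\sum_(R in powerset (J :\: W)) (2 ^ #|W|).-1)%N%:R)).
  by rewrite ler_nat; apply: leq_sum.
rewrite sum_nat_const card_powerset natrM -subn1 natrB ?expn_gt0 //.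
rewrite HJ !natrX exprD mulrBl mul1r mulrBr mulrCA mulVf ?mulr1 ?expf_neq0 //.
Qed.

Lemma L_step (D J : {set X}) (P Q : pred {set X}) (c : rat) : J \subset D ->
  (forall E : {set X}, Q E = Q (E :\: J)) ->
  (forall R : {set X}, R \subset D :\: J ->
     #|[set Y in powerset J | P (R :|: Y)]|%:R <= c * 2 ^+ #|J|) ->
  (#|[set E in powerset D | P E && Q E]|%:R : rat) <=
    c * #|[set E in powerset D | Q E]|%:R.
Proof.
move=> sJD HQ HP.
rewrite (L_split (fun E => P E && Q E) sJD) (L_split Q sJD).
rewrite !natr_sum mulr_sumr; apply: ler_sum => R; rewrite inE => sR.
have QRY : forall Y : {set X}, Y \subset J -> Q (R :|: Y) = Q R.
  move=> Y sY; rewrite HQ; congr Q; apply/setP => x; rewrite !inE.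
  case xJ: (x \in J) => /=.
    apply/esym/negbTE/negP => xR; by move: (subsetP sR x xR); rewrite !inE xJ.
  rewrite (_ : x \in Y = false) ?orbF //; apply/negP => xY; by move: (subsetP sY x xY); rewrite xJ.
case qR: (Q R).
  rewrite (_ : [set Y in powerset J | Q (R :|: Y)] = powerset J); last first.
    by apply/setP => Y; rewrite !inE andbC; apply: andb_idl => sY; rewrite !QRY ?qR.
  rewrite card_powerset natrX.
  rewrite (_ : [set Y in powerset J | P (R :|: Y) && Q (R :|: Y)] = [set Y in powerset J | P (R :|: Y)]); first exact: HP.
  by apply/setP => Y; rewrite !inE; apply: andb_id2l => sY; rewrite !QRY ?qR ?andbT.
rewrite (_ : [set Y in powerset J | P (R :|: Y) && Q (R :|: Y)] = set0); last first.
  by apply/setP => Y; rewrite !inE; apply/negbTE/negP => /andP [sY]; rewrite !QRY ?qR ?andbF.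
rewrite (_ : [set Y in powerset J | Q (R :|: Y)] = set0); last first.
  by apply/setP => Y; rewrite !inE; apply/negbTE/negP => /andP [sY]; rewrite !QRY ?qR ?andbF.
by rewrite cards0 mulr0.
Qed.

Lemma L_iter (I : eqType) (D : {set X}) (J : I -> {set X}) (F : I -> pred {set X})
    (c : rat) (s : seq I) : 0 <= c -> uniq s ->
  (forall i, i \in s -> J i \subset D) ->
  (forall i j, i \in s -> j \in s -> i != j -> forall E : {set X}, F i E = F i (E :\: J j)) ->
  (forall i, i \in s -> forall R : {set X}, R \subset D :\: J i ->
     #|[set Y in powerset (J i) | F i (R :|: Y)]|%:R <= c * 2 ^+ #|J i|) ->
  (#|[set E in powerset D | all (fun i => F i E) s]|%:R : rat) <= c ^+ size s * 2 ^+ #|D|.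
Proof.
move=> c0; elim: s => [|a s IH] /=.
  move=> _ _ _ _; rewrite expr0 mul1r.
  rewrite (_ : [set E in powerset D | true] = powerset D); first by rewrite card_powerset natrX.
  by apply/setP => E; rewrite !inE andbT.
move=> /andP [nas us] HJ HF HB.
have h1 : J a \subset D by apply: HJ; rewrite inE eqxx.
have h2 : forall E : {set X}, all (fun i => F i E) s = all (fun i => F i (E :\: J a)) s.
  move=> E; apply: eq_in_all => i iS; apply: HF; rewrite ?inE ?iS ?eqxx ?orbT //.
  by apply/eqP => eia; move: nas; rewrite -eia iS.
have h3 := HB a (mem_head _ _).
apply: le_trans (L_step (P := F a) (Q := fun E => all (fun i => F i E) s) h1 h2 h3) _.
rewrite exprS -mulrA ler_wpM2l //; apply: IH => //.
- by move=> i iS; apply: HJ; rewrite inE iS orbT.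
- by move=> i j iS jS; apply: HF; rewrite inE ?iS ?jS orbT.
- by move=> i iS; apply: HB; rewrite inE iS orbT.
Qed.

End Counting.

Lemma card_union (Z I : finType) (A : {set Z}) (p : pred I) (P : pred Z) (Q : I -> pred Z) :
  (forall x, x \in A -> P x -> exists i, p i && Q i x) ->
  (#|[set x in A | P x]| <= \sum_(i | p i) #|[set x in A | Q i x]|)%N.
Proof.
move=> H.
have cs : forall P' : pred Z, #|[set x in A | P' x]| = \sum_(x in A) (P' x : nat).
  move=> P'; rewrite -sum1_card big_mkcond /= [RHS]big_mkcond /=.
  by apply: eq_bigr => x _; rewrite inE; case: (x \in A); case: (P' x).
rewrite cs (eq_bigr _ (fun i _ => cs (Q i))) exchange_big /=.
apply: leq_sum => x xA; case Px: (P x) => //.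
have [i /andP [pi Qi]] := H x xA Px.
by rewrite (bigD1 i) //= Qi.
Qed.

Section Graph.
Variable n : nat.
Implicit Types (E R K Y : {set {set 'I_n}}) (x y v : 'I_n) (V U S : {set 'I_n}).

Definition P2 : {set {set 'I_n}} := [set e : {set 'I_n} | #|e| == 2].

Lemma graphsE : graphs n = powerset P2.
Proof.
apply/setP => E; rewrite !inE /is_graph; apply/forall_inP/subsetP.
  by move=> H e eE; rewrite inE H.
by move=> H e eE; move: (H e eE); rewrite inE.
Qed.

Lemma set2_inj x y z : [set x; y] = [set x; z] -> y = z.
Proof.
move=> e; have : y \in [set x; z] by rewrite -e set22.
case/set2P => // yx; subst y.
have : z \in [set x; x] by rewrite e set22.
by case/set2P => ->.
Qed.

Lemma set2C x y : [set x; y] = [set y; x].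
Proof. by rewrite setUC. Qed.

Lemma adj_setD E (K : {set {set 'I_n}}) y x : [set y; x] \notin K ->
  adj (E :\: K) y x = adj E y x.
Proof. by move=> nK; rewrite /adj inE nK. Qed.

Lemma adj_setU E (K : {set {set 'I_n}}) y x :
  adj (E :|: K) y x = adj E y x || ([set y; x] \in K).
Proof. by rewrite /adj inE. Qed.

Definition common E (V : {set 'I_n}) := [set y | [forall x in V, adj E y x]].

Lemma thetaE t E (V : {set 'I_n}) : (V \in theta t E) = (#|V| == t) && odd #|common E V|.
Proof. by rewrite /theta inE. Qed.

Lemma common_setD E K V : (forall y x, x \in V -> [set y; x] \notin K) ->
  common (E :\: K) V = common E V.
Proof.
move=> H; apply/setP => y; rewrite !inE; apply: eq_forallb_in => x xV.
by rewrite adj_setD // H.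
Qed.

Lemma in_common1 E v U y : (y \in common E (v |: U)) = adj E y v && [forall x in U, adj E y x].
Proof.
rewrite !inE; apply/forall_inP/andP.
  move=> H; split; first by apply: H; rewrite !inE eqxx.
  by apply/forall_inP => x xU; apply: H; rewrite !inE xU orbT.
case=> H1 /forall_inP H2 x; rewrite !inE => /orP [/eqP -> //|]; exact: H2.
Qed.


Definition nbr E (S : {set 'I_n}) y U := [forall s in S, adj E y s == (s \in U)].
Definition good_v t (S : {set 'I_n}) (T : {set {set 'I_n}}) E v :=
  [forall U in binom_sets S t.-1, ((v |: U) \in theta t E) == (U \in T)].

Lemma in_binom (S U : {set 'I_n}) m : (U \in binom_sets S m) = (U \subset S) && (#|U| == m).
Proof. by rewrite /binom_sets !inE. Qed.

Lemma heart2 t (S : {set 'I_n}) (T : {set {set 'I_n}}) (B : {set 'I_n}) v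
    (yU : {set 'I_n} -> 'I_n) R R' :
  0 < t -> v \notin S -> v \notin B -> (forall b, b \in B -> b \notin S) ->
  (forall U, U \in binom_sets S t.-1 -> (yU U \in B) && nbr R S (yU U) U) ->
  (forall b, b \in B -> [set v; b] \notin R) ->
  (forall U, U \in binom_sets S t.-1 -> [set v; yU U] \notin R') ->
  (forall e, e \in R' -> exists2 b, b \in B & e = [set v; b]) ->
  exists Y, (Y \subset [set [set v; yU U] | U in binom_sets S t.-1]) &&
            good_v t S T (R :|: (R' :|: Y)) v.
Proof.
move=> t0 vS vB BS HyU HR HR' HR'J.
set bs := binom_sets S t.-1.
set E0 := R :|: R'.
set flips := [set U in bs | odd #|common E0 (v |: U)| != (U \in T)].
set Y := [set [set v; yU U] | U in flips].
exists Y; apply/andP; split.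
  by apply: imsetS; apply/subsetP => U; rewrite inE => /andP [].
rewrite setUA -/E0; apply/forall_inP => U Ubs.
move: (Ubs); rewrite in_binom => /andP [sUS /eqP cU].
have vU : v \notin U by apply/negP => vU; move: vS; rewrite (subsetP sUS v vU).
have cvU : #|v |: U| = t by rewrite cardsU1 vU cU add1n prednK.
have adjS : forall y x, x \in S -> adj (E0 :|: Y) y x = adj E0 y x.
  move=> y x xS; rewrite adj_setU; case: imsetP => [[U' U'f e]|_]; last by rewrite orbF.
  have : x \in [set v; yU U'] by rewrite -e set22.
  case/set2P => ex; first by move: vS; rewrite -ex xS.
  move: U'f; rewrite inE => /andP [/HyU /andP [yB _] _].
  by move: (BS _ yB); rewrite -ex xS.
have adjv : forall y, adj (E0 :|: Y) y v = adj E0 y v || (y \in [set yU U' | U' in flips]).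
  move=> y; rewrite adj_setU; congr orb; apply/imsetP/imsetP => [[U' U'f e]|[U' U'f ->]].
    by exists U' => //; apply: (set2_inj (x := v)); rewrite -e set2C.
  by exists U' => //; rewrite set2C.
have adjR0 : forall U' x, U' \in bs -> x \in S -> adj E0 (yU U') x = (x \in U').
  move=> U' x U'b xS; rewrite /E0 adj_setU.
  have /andP [yB /forall_inP Hn] := HyU U' U'b.
  rewrite (eqP (Hn x xS)) (_ : (_ \in R') = false) ?orbF //.
  apply/negP => /HR'J [b bB e].
  have : x \in [set v; b] by rewrite -e set22.
  case/set2P => ex; first by move: vS; rewrite -ex xS.
  by move: (BS _ bB); rewrite -ex xS.
have yUn : yU U \notin common E0 (v |: U).
  rewrite in_common1 /adj /E0 inE set2C negb_and; apply/orP; left.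
  rewrite negb_or HR' // andbT.
  by apply: HR; have /andP [] := HyU U Ubs.
have mem : forall y, (y \in common (E0 :|: Y) (v |: U)) =
    (y \in common E0 (v |: U)) || ((U \in flips) && (y == yU U)).
  move=> y; rewrite !in_common1 adjv.
  have -> : [forall x in U, adj (E0 :|: Y) y x] = [forall x in U, adj E0 y x].
    by apply: eq_forallb_in => x xU; rewrite adjS // (subsetP sUS).
  rewrite andb_orl; congr orb.
  apply/andP/andP => [[/imsetP [U' U'f ->] /forall_inP H]|[Uf /eqP ->]].
    have U'b : U' \in bs by move: U'f; rewrite inE => /andP [].
    have sUU' : U \subset U'.
      by apply/subsetP => x xU; rewrite -(adjR0 U' x U'b (subsetP sUS x xU)); apply: H.
    have eUU' : U = U'.
      apply/eqP; rewrite eqEcard sUU' /=.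
      by move: U'b; rewrite in_binom => /andP [_ /eqP ->]; rewrite cU.
    by rewrite eUU' U'f eqxx.
  split; first by apply/imsetP; exists U.
  by apply/forall_inP => x xU; rewrite adjR0 // (subsetP sUS).
rewrite thetaE cvU eqxx /=.
case: (boolP (U \in flips)) => Uf.
  have -> : common (E0 :|: Y) (v |: U) = yU U |: common E0 (v |: U).
    by apply/setP => y; rewrite mem Uf !inE orbC.
  rewrite cardsU1 yUn /= ?add0n.
  by move: Uf; rewrite inE Ubs /=; case: (odd _); case: (U \in T).
have -> : common (E0 :|: Y) (v |: U) = common E0 (v |: U).
  by apply/setP => y; rewrite mem (negbTE Uf) orbF.
by move: Uf; rewrite inE Ubs /=; case: (odd _); case: (U \in T).
Qed.


Local Open Scope ring_scope.

Definition qk (k : nat) : rat := 1 - (2 ^+ (2 ^ k))^-1.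

Lemma qk_mono k w : (w <= 2 ^ k)%N -> 1 - (2 ^+ w)^-1 <= qk k.
Proof.
move=> wk; rewrite /qk lerD2l lerN2 lef_pV2 ?posrE ?exprn_gt0 //.
by apply: ler_weXn2l.
Qed.

Lemma qk_ge0 k : 0 <= qk k.
Proof.
rewrite /qk subr_ge0 invf_le1 ?exprn_gt0 //.
by rewrite exprn_ege1.
Qed.

Lemma qk_le1 k : qk k <= 1.
Proof. by rewrite /qk lerBlDr lerDl invr_ge0 exprn_ge0. Qed.

Definition Ky (S : {set 'I_n}) y := [set [set y; s] | s in S].

Lemma Ky_sub S y : y \notin S -> Ky S y \subset P2.
Proof.
move=> yS; apply/subsetP => e /imsetP [s sS ->]; rewrite inE cards2.
have -> // : y != s by apply/negP => /eqP ys; move: yS; rewrite ys sS.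
Qed.

Lemma step3 k (S U : {set 'I_n}) (B : {set 'I_n}) : #|S| = k ->
  (forall b, b \in B -> b \notin S) ->
  #|[set E in powerset P2 | all (fun y => ~~ nbr E S y U) (enum B)]|%:R
    <= qk k ^+ #|B| * 2 ^+ #|P2|.
Proof.
move=> cS BS; rewrite (cardE B).
apply: (L_iter (J := Ky S) (F := fun y E => ~~ nbr E S y U)) => //.
- exact: qk_ge0.
- exact: enum_uniq.
- by move=> y; rewrite mem_enum => yB; apply: Ky_sub; apply: BS.
- move=> y y' yB y'B yy' E; congr negb; apply: eq_forallb_in => s sS.
  rewrite adj_setD //; apply/negP => /imsetP [s' s'S e].
  have : y \in [set y'; s'] by rewrite -e set21.
  case/set2P => ey; first by move: yy'; rewrite ey eqxx.
  by move: yB; rewrite mem_enum => /BS; rewrite ey s'S.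
move=> y; rewrite mem_enum => yB R sR.
apply: le_trans; last first.
  apply: ler_wpM2r; last apply: (qk_mono (w := #|Ky S y|)).
    by rewrite exprn_ge0.
  apply: leq_trans (leq_imset_card _ _) _; rewrite cS.
  by apply: ltnW; apply: ltn_expl.
apply: L_one => //.
move=> R' sR'; exists [set [set y; s] | s in U :&: S]; apply/andP; split.
  by apply: imsetS; apply: subsetIr.
rewrite negbK; apply/forall_inP => s sS.
rewrite /adj !inE.
have -> : ([set y; s] \in R) = false.
  apply/negbTE/negP => /(subsetP sR); rewrite !inE => /andP [/negP []].
  by apply/imsetP; exists s.
have -> : ([set y; s] \in R') = false.
  by apply/negbTE/negP => /(subsetP sR'); rewrite setDv inE.
apply/eqP; apply/imsetP/idP => [[s' s'U /set2_inj ->]|sU].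
  by move: s'U; rewrite inE => /andP [].
by exists s => //; rewrite inE sU.
Qed.


Definition Jv (B : {set 'I_n}) v := [set [set v; b] | b in B].
Definition Zgood S (B : {set 'I_n}) m E := [forall U in binom_sets S m, [exists y in B, nbr E S y U]].

Lemma binom_card S m : (#|binom_sets S m| <= 2 ^ #|S|)%N.
Proof.
rewrite -card_powerset; apply: subset_leq_card; apply/subsetP => U.
by rewrite in_binom inE => /andP [].
Qed.

Section Step2.
Variables (k t : nat) (S : {set 'I_n}) (T : {set {set 'I_n}}) (A B : {set 'I_n}).
Hypotheses (t0 : (0 < t)%N) (cS : #|S| = k) (AS : forall a, a \in A -> a \notin S)
  (AB : forall a, a \in A -> a \notin B) (BS : forall b, b \in B -> b \notin S).

Lemma ZgoodD w E m : w \in A -> Zgood S B m E = Zgood S B m (E :\: Jv B w).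
Proof.
move=> wA; apply: eq_forallb_in => U _; apply: eq_existsb_in => y yB.
apply: eq_forallb_in => s sS; rewrite adj_setD //.
apply/negP => /imsetP [b bB e].
have : s \in [set w; b] by rewrite -e set22.
case/set2P => es; first by move: (AS wA); rewrite -es sS.
by move: (BS bB); rewrite -es sS.
Qed.

Lemma goodD v w E : v \in A -> w \in A -> v != w ->
  good_v t S T E v = good_v t S T (E :\: Jv B w) v.
Proof.
move=> vA wA vw; apply: eq_forallb_in => U; rewrite in_binom => /andP [sUS _].
rewrite !thetaE common_setD // => y x xvU; apply/negP => /imsetP [b bB e].
have /set2P xwb : x \in [set w; b] by rewrite -e set22.
move: xvU; rewrite !inE => /orP [/eqP xv | xU]; case: xwb => ex; rewrite ?xv in ex.
- by move: vw; rewrite ex eqxx.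
- by move: (AB vA); rewrite ex bB.
- by move: (AS wA); rewrite -ex (subsetP sUS x xU).
- by move: (BS bB); rewrite -ex (subsetP sUS x xU).
Qed.

Lemma Jv_sub v : v \in A -> Jv B v \subset P2.
Proof.
move=> vA; apply/subsetP => e /imsetP [b bB ->]; rewrite inE cards2.
have -> // : v != b by apply/negP => /eqP vb; move: (AB vA); rewrite vb bB.
Qed.

Lemma step2 :
  #|[set E in powerset P2 | all (fun v => ~~ good_v t S T E v && Zgood S B t.-1 E) (enum A)]|%:R
    <= qk k ^+ #|A| * 2 ^+ #|P2|.
Proof.
rewrite (cardE A).
apply: (L_iter (J := Jv B) (F := fun v E => ~~ good_v t S T E v && Zgood S B t.-1 E)) => //.
- exact: qk_ge0.
- exact: enum_uniq.
- by move=> v; rewrite mem_enum; apply: Jv_sub.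
- move=> v w; rewrite !mem_enum => vA wA vw E.
  by rewrite -(goodD _ vA wA vw) -ZgoodD.
move=> v; rewrite mem_enum => vA R sR.
have ZRY : forall Y, Y \subset Jv B v -> Zgood S B t.-1 (R :|: Y) = Zgood S B t.-1 R.
  move=> Y sY; rewrite (ZgoodD _ _ vA); congr Zgood; apply/setP => e; rewrite !inE.
  case eJ: (e \in Jv B v) => /=.
    apply/esym/negbTE/negP => eR; move: (subsetP sR e eR); rewrite !inE eJ.
    by [].
  rewrite (_ : e \in Y = false) ?orbF //; apply/negbTE/negP => eY.
  by move: (subsetP sY e eY); rewrite eJ.
case: (boolP (Zgood S B t.-1 R)) => ZR; last first.
  rewrite (_ : [set Y in powerset (Jv B v) | _] = set0).
    by rewrite cards0 mulr_ge0 ?qk_ge0 ?exprn_ge0.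
  apply/setP => Y; rewrite !inE; apply/negbTE/negP => /andP [sY /andP [_]].
  by rewrite ZRY // (negbTE ZR).
set bs := binom_sets S t.-1.
pose yU U := odflt v [pick y in B | nbr R S y U].
have HyU : forall U, U \in bs -> (yU U \in B) && nbr R S (yU U) U.
  move=> U Ub; rewrite /yU; case: pickP => [y /andP [yB Hy] | H] /=; first by rewrite yB.
  by move/forall_inP: ZR => /(_ U Ub) /exists_inP [y yB Hy]; move: (H y); rewrite yB Hy.
set W := [set [set v; yU U] | U in bs].
have sWJ : W \subset Jv B v.
  by apply/subsetP => e /imsetP [U Ub ->]; apply/imsetP; exists (yU U); first by case/andP: (HyU U Ub).
apply: le_trans; last first.
  apply: ler_wpM2r; last apply: (qk_mono (w := #|W|)).
    by rewrite exprn_ge0.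
  apply: leq_trans (leq_imset_card _ _) _; rewrite -cS; exact: binom_card.
apply: L_one => // R' sR'.
have HR : forall b, b \in B -> [set v; b] \notin R.
  move=> b bB; apply/negP => /(subsetP sR); rewrite !inE => /andP [/negP []].
  by apply/imsetP; exists b.
have HR' : forall U, U \in bs -> [set v; yU U] \notin R'.
  move=> U Ub; apply/negP => /(subsetP sR'); rewrite !inE => /andP [/negP []].
  by apply/imsetP; exists U.
have HR'J : forall e, e \in R' -> exists2 b, b \in B & e = [set v; b].
  by move=> e /(subsetP sR'); rewrite !inE => /andP [_ /imsetP [b bB ->]]; exists b.
have [Y /andP [sYW gY]] := @heart2 t S T B v yU R R' t0 (AS vA) (AB vA) BS HyU HR HR' HR'J.
by exists Y; rewrite sYW gY.
Qed.

Definition badST := [set E in powerset P2 | [forall v, (v \notin S) ==> ~~ good_v t S T E v]].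

Lemma countST : #|badST|%:R <= (qk k ^+ #|A| + (2 ^ k)%:R * qk k ^+ #|B|) * 2 ^+ #|P2|.
Proof.
set X1 := [set E in powerset P2 | all (fun v => ~~ good_v t S T E v && Zgood S B t.-1 E) (enum A)].
set X2 := [set E in powerset P2 | ~~ Zgood S B t.-1 E].
have sub : badST \subset X1 :|: X2.
  apply/subsetP => E; rewrite !inE => /andP [EP /forallP H].
  rewrite EP /=; case: (boolP (Zgood S B t.-1 E)) => ZE; last by rewrite orbT.
  apply/orP; left; apply/allP => v; rewrite mem_enum => vA /=; rewrite andbT.
  by apply: (implyP (H v)); apply: AS.
apply: le_trans (_ : (#|X1| + #|X2|)%:R <= _).
  by rewrite ler_nat; apply: leq_trans (subset_leq_card sub) (leq_card_setU _ _).
rewrite natrD mulrDl lerD ?step2 //.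
have u := @card_union _ _ (powerset P2) (fun U => U \in binom_sets S t.-1) (fun E => ~~ Zgood S B t.-1 E)
  (fun U E => all (fun y => ~~ nbr E S y U) (enum B)).
apply: le_trans (_ : (\sum_(U | U \in binom_sets S t.-1)
    #|[set x in powerset P2 | all (fun y => ~~ nbr x S y U) (enum B)]|)%:R <= _).
  rewrite ler_nat; apply: u => E _ /forall_inP nZ.
  have [U Ub nU] : exists2 U, U \in binom_sets S t.-1 & ~~ [exists y in B, nbr E S y U].
    by apply/exists_inP; rewrite -negb_forall_in; apply/negP => /forall_inP.
  exists U; rewrite Ub /=; apply/allP => y; rewrite mem_enum => yB.
  by apply/negP => ny; move/negP: nU; apply; apply/exists_inP; exists y.
rewrite natr_sum.
apply: le_trans (_ : \sum_(U | U \in binom_sets S t.-1) qk k ^+ #|B| * 2 ^+ #|P2| <= _).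
  by apply: ler_sum => U _; apply: step3.
rewrite sumr_const -[X in X <= _]mulr_natl mulrA ler_wpM2r ?exprn_ge0 // ler_wpM2r ?exprn_ge0 ?qk_ge0 // ler_nat.
by rewrite -cS; apply: binom_card.
Qed.

End Step2.


Lemma splitAB (S : {set 'I_n}) k : #|S| = k -> exists A B : {set 'I_n},
  [/\ (forall a, a \in A -> a \notin S), (forall a, a \in A -> a \notin B),
      (forall b, b \in B -> b \notin S), ((n - k)./2 <= #|A|)%N & ((n - k)./2 <= #|B|)%N].
Proof.
move=> cS; set cs := enum (~: S); set h := (n - k)./2.
have scs : size cs = (n - k)%N.
  have E : (#|S| + #|~: S| = n)%N by rewrite cardsC card_ord.
  rewrite /cs -cardE; lia.
have ucs : uniq cs by apply: enum_uniq.
have hle : (h.*2 <= n - k)%N by rewrite -geq_half_double.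
have hle1 : (h <= n - k)%N by apply: leq_trans hle; rewrite -addnn leq_addr.
exists [set x in take h cs], [set x in drop h cs]; split.
- by move=> a; rewrite inE => /mem_take; rewrite mem_enum inE.
- move=> a; rewrite !inE => aT; apply/negP => aD.
  move: ucs; rewrite -(cat_take_drop h cs) cat_uniq => /and3P [_ /hasPn H _].
  by move: (H a aD); rewrite aT.
- by move=> b; rewrite inE => /mem_drop; rewrite mem_enum inE.
- by rewrite cardsE (card_uniqP (take_uniq _ ucs)) size_takel // scs.
rewrite cardsE (card_uniqP (drop_uniq _ ucs)) size_drop scs.
by rewrite leq_subRL // addnn.
Qed.

Lemma bad_bound k t : (0 < t)%N ->
  #|[set E in graphs n | ~~ @EA n t k (theta t E)]|%:R <=
    ('C(n, k) * 2 ^ 2 ^ k)%:R * ((1 + (2 ^ k)%:R) * qk k ^+ (n - k)./2 * 2 ^+ #|P2|).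
Proof.
move=> t0; rewrite graphsE.
set c := (1 + (2 ^ k)%:R) * qk k ^+ (n - k)./2 * 2 ^+ #|P2|.
apply: le_trans (_ : (\sum_(S : {set 'I_n} | #|S| == k)
   \sum_(T : {set {set 'I_n}} | T \subset binom_sets S t.-1) #|badST t S T|)%:R <= _).
  rewrite ler_nat.
  apply: leq_trans (@card_union _ {set 'I_n} (powerset P2) (fun S => #|S| == k) (fun E => ~~ @EA n t k (theta t E))
    (fun S E => [exists T : {set {set 'I_n}}, (T \subset binom_sets S t.-1) &&
                  [forall v, (v \notin S) ==> ~~ good_v t S T E v]]) _) _.
    move=> E _; rewrite /EA negb_forall => /existsP [S]; rewrite negb_imply => /andP [cS].
    rewrite negb_forall => /existsP [T]; rewrite negb_imply => /andP [sT].
    rewrite negb_exists => /forallP H.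
    exists S; rewrite cS /=; apply/existsP; exists T; rewrite sT /=.
    apply/forallP => v; apply/implyP => vS; move: (H v); rewrite negb_and vS /=.
    by [].
  apply: leq_sum => S cS.
  apply: (@card_union _ {set {set 'I_n}} (powerset P2) (fun T => T \subset binom_sets S t.-1)).
  by move=> E _ /existsP [T /andP [sT H]]; exists T; rewrite sT.
rewrite natr_sum.
apply: le_trans (_ : \sum_(S : {set 'I_n} | #|S| == k) (2 ^ 2 ^ k)%:R * c <= _).
  apply: ler_sum => S /eqP cS; rewrite natr_sum.
  apply: le_trans (_ : \sum_(T : {set {set 'I_n}} | T \subset binom_sets S t.-1) c <= _).
    apply: ler_sum => T _.
    have [A [B [AS AB BS hA hB]]] := splitAB cS.
    apply: le_trans (countST T t0 cS AS AB BS) _.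
    rewrite /c ler_wpM2r ?exprn_ge0 // mulrDl mul1r lerD //.
      by apply: ler_wiXn2l; rewrite ?qk_ge0 ?qk_le1.
    apply: ler_wpM2l; first by rewrite ler0n.
    by apply: ler_wiXn2l; rewrite ?qk_ge0 ?qk_le1.
  rewrite sumr_const.
  rewrite mulr_natl; apply: ler_wpMn2l.
    by rewrite /c !mulr_ge0 ?exprn_ge0 ?qk_ge0 // addr_ge0 ?ler0n.
  have -> : #|[pred T : {set {set 'I_n}} | T \subset binom_sets S t.-1]| = #|powerset (binom_sets S t.-1)|.
    by apply: eq_card => T; rewrite !inE.
  rewrite card_powerset leq_pexp2l // -cS; exact: binom_card.
rewrite sumr_const.
have -> : #|[pred S : {set 'I_n} | #|S| == k]| = 'C(n, k).
  by rewrite -cardsE card_draws card_ord.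
by rewrite -(mulr_natl ((2 ^ 2 ^ k)%:R * c)) mulrA natrM.
Qed.

Lemma fail_bound k t : (0 < t)%N ->
  fail_prob t k n <= ('C(n, k) * 2 ^ 2 ^ k)%:R * ((1 + (2 ^ k)%:R) * qk k ^+ (n - k)./2).
Proof.
move=> t0; rewrite /fail_prob.
have -> : #|graphs n| = (2 ^ #|P2|)%N by rewrite graphsE card_powerset.
rewrite ler_pdivrMr ?ltr0n ?expn_gt0 // -mulrA; apply: le_trans (bad_bound k t0) _; by rewrite -natrX.
Qed.

End Graph.
Local Open Scope ring_scope.

Lemma bernoulli (e : rat) (m : nat) : 0 <= e -> 1 + m%:R * e <= (1 + e) ^+ m.
Proof.
move=> e0; elim: m => [|m IH]; first by rewrite mul0r addr0 expr0.
rewrite exprS; apply: le_trans (_ : (1 + e) * (1 + m%:R * e) <= _); last first.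
  by rewrite ler_wpM2l // addr_ge0.
rewrite -natr1; have m0 : 0 <= (m%:R : rat) by rewrite ler0n.
have := mulr_ge0 (mulr_ge0 m0 e0) e0; nra.
Qed.

Lemma exists_nat (x : rat) : exists m : nat, x < m%:R.
Proof.
case: (leP 0 x) => x0; last by exists 0%N.
by exists (Num.bound x); apply: archi_boundP.
Qed.

Lemma expdecay (e q K : rat) (a : nat) : 0 < e -> e <= 1 -> 0 <= q -> q * (1 + e) = 1 -> 0 <= K ->
  exists N : nat, forall j : nat, (N <= j)%N -> K * (j.+1)%:R ^+ a * q ^+ j < 1.
Proof.
move=> e0 e1 q0 qe K0.
set b := a.+1.
set C := K * (b%:R / e) ^+ a.
have C0 : 0 <= C by rewrite mulr_ge0 // exprn_ge0 // divr_ge0 // ltW.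
have [M HM] := exists_nat (C / e).
exists (b * M)%N => j hj.
set m := (j %/ b)%N.
have mM : (M <= m)%N by rewrite /m leq_divRL // mulnC.
have q1 : q <= 1 by nra.
set X := 1 + m%:R * e.
have m0 : 0 <= (m%:R : rat) by rewrite ler0n.
have X1 : 1 <= X by rewrite /X lerDl mulr_ge0 // ltW.
have X0 : 0 < X by apply: lt_le_trans X1.
have h1 : q ^+ j <= q ^+ (b * m) by apply: ler_wiXn2l => //; rewrite mulnC leq_trunc_div.
have h2 : (j.+1)%:R <= b%:R / e * X.
  have : (j.+1 <= m.+1 * b)%N by apply: ltn_ceil.
  rewrite -(ler_nat rat) natrM => H; apply: le_trans H _.
  rewrite mulrC -mulrA ler_wpM2l ?ler0n // /X -natr1.
  rewrite ler_pdivlMl //; nra.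
have h3 : X ^+ b * q ^+ (b * m) <= 1.
  have : X ^+ b <= ((1 + e) ^+ m) ^+ b.
    apply: lerXn2r.
    - by rewrite nnegrE ltW.
    - by rewrite nnegrE exprn_ge0 // addr_ge0 // ltW.
    exact: bernoulli (ltW e0).
  rewrite -exprM mulnC => H; apply: le_trans (ler_wpM2r (exprn_ge0 _ q0) H) _.
  by rewrite -exprMn mulrC qe expr1n.
have hXC : C < X.
  have : C / e < m%:R by apply: lt_le_trans HM _; rewrite ler_nat.
  rewrite ltr_pdivrMr // => H; rewrite /X; apply: lt_le_trans H _.
  by rewrite lerDr.
set Z := C * X ^+ a * q ^+ (b * m).
have hZ : K * (j.+1)%:R ^+ a * q ^+ j <= Z.
  rewrite /Z /C.
  apply: le_trans (_ : K * (j.+1)%:R ^+ a * q ^+ (b * m) <= _).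
    by apply: ler_wpM2l h1; rewrite mulr_ge0 // exprn_ge0 // ler0n.
  rewrite -!mulrA ler_wpM2l // !mulrA -exprMn ler_wpM2r ?exprn_ge0 //.
  apply: lerXn2r => //; rewrite nnegrE ?ler0n //.
  by rewrite mulr_ge0 // ?(ltW X0) // divr_ge0 // ltW.
apply: le_lt_trans hZ _.
have XZ : X * Z <= C.
  have -> : X * Z = C * (X ^+ b * q ^+ (b * m)) by rewrite /Z /b exprS; ring.
  by apply: le_trans (ler_wpM2l C0 h3) _; rewrite mulr1.
rewrite ltNge; apply/negP => Z1.
have : X <= X * Z by rewrite -{1}(mulr1 X) ler_wpM2l // ltW.
move=> H; have := le_trans H XZ; rewrite leNgt hXC.
by [].
Qed.
Local Open Scope ring_scope.

Lemma polybound (p : {poly rat}) : exists2 P : rat, 0 <= P &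
  forall x : rat, 1 <= x -> p.[x] <= P * x ^+ size p.
Proof.
exists (\sum_(i < size p) `|p`_i|); first by apply: sumr_ge0 => i _.
move=> x x1; rewrite horner_coef mulr_suml; apply: ler_sum => i _.
apply: le_trans (ler_norm _) _; rewrite normrM.
have x0 : 0 <= x by apply: le_trans x1.
rewrite ler_wpM2l // normrX ger0_norm //; apply: ler_weXn2l => //.
exact: ltnW.
Qed.

Lemma binom_le n k : ('C(n, k) <= n ^ k)%N.
Proof.
apply: leq_trans (_ : n ^_ k <= _)%N.
  by rewrite -bin_ffact leq_pmulr // fact_gt0.
elim: k n => [|k IH] n //; rewrite ffactnS expnS leq_mul //.
apply: leq_trans (IH _) _; case: k {IH} => // k; by rewrite leq_exp2r ?leq_pred.
Qed.

Theorem mainTheorem15 (k t : nat) (hk : (1 <= k)%N) (ht : (2 <= t)%N) :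
  negligible (fail_prob t k).
Proof.
move=> p [N0 HN0].
have t0 : (0 < t)%N by apply: leq_trans ht.
have [P P0 HP] := polybound p.
set d := size p; set a := (k + d)%N.
set Mq : rat := 2 ^+ (2 ^ k).
have Mq2 : 2 <= Mq.
  rewrite /Mq -[X in X <= _]expr1; apply: ler_weXn2l => //.
  by rewrite expn_gt0.
set e := (Mq - 1)^-1.
have e0 : 0 < e by rewrite invr_gt0 subr_gt0; apply: lt_le_trans Mq2.
have e1 : e <= 1 by rewrite invf_le1 ?subr_gt0 ?lerBrDr; [lra | apply: lt_le_trans Mq2].
have qe : qk k * (1 + e) = 1.
  rewrite /qk -/Mq /e; field.
  by apply/andP; split; apply/negP => /eqP H; move: Mq2; rewrite ?H; lra.
set C2 : rat := (2 ^ 2 ^ k)%:R * (1 + (2 ^ k)%:R) * P.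
have C20 : 0 <= C2 by rewrite !mulr_ge0 ?ler0n ?addr_ge0.
set K : rat := (k + 2)%:R ^+ a * C2.
have K0 : 0 <= K by rewrite mulr_ge0 ?exprn_ge0 ?ler0n.
have [N1 HN1] := expdecay a e0 e1 (qk_ge0 k) qe K0.
exists (maxn N0 (maxn 1 (N1.*2 + k))) => n hn.
have nN0 : (N0 <= n)%N by apply: leq_trans hn; rewrite leq_maxl.
have n1 : (1 <= n)%N by apply: leq_trans hn; rewrite (leq_trans _ (leq_maxr _ _)) ?leq_maxl.
have nN1 : (N1.*2 + k <= n)%N by apply: leq_trans hn; rewrite (leq_trans _ (leq_maxr _ _)) ?leq_maxr.
set h := (n - k)./2.
have hN1 : (N1 <= h)%N by rewrite /h geq_half_double; rewrite -addnn in nN1 *; lia.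
have nh0 : (n - k <= h.*2.+1)%N by rewrite -leq_half_double.
have nh : (n <= (k + 2) * h.+1)%N by rewrite -addnn in nh0; nia.
have pn := HN0 n nN0.
rewrite -[_^-1]mul1r ltr_pdivlMr //.
apply: le_lt_trans (HN1 h hN1).
set Bn := ('C(n, k) * 2 ^ 2 ^ k)%:R * ((1 + (2 ^ k)%:R) * qk k ^+ h).
have Bn0 : 0 <= Bn by rewrite !mulr_ge0 ?ler0n ?addr_ge0 ?exprn_ge0 ?qk_ge0.
apply: le_trans (_ : Bn * p.[n%:R] <= _).
  by rewrite ler_wpM2r ?(ltW pn) //; apply: fail_bound.
apply: le_trans (_ : Bn * (P * n%:R ^+ d) <= _).
  by rewrite ler_wpM2l // HP // ler1n.
have E1 : Bn * (P * n%:R ^+ d) = ('C(n, k)%:R * n%:R ^+ d) * (C2 * qk k ^+ h).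
  by rewrite /Bn /C2 natrM; ring.
have E2 : K * (h.+1)%:R ^+ a * qk k ^+ h = ((k + 2)%:R ^+ a * (h.+1)%:R ^+ a) * (C2 * qk k ^+ h).
  by rewrite /K; ring.
have H3 : ('C(n, k)%:R : rat) * n%:R ^+ d <= (k + 2)%:R ^+ a * (h.+1)%:R ^+ a.
  apply: le_trans (_ : (n%:R : rat) ^+ a <= _).
    rewrite /a exprD.
    have Hc : ('C(n, k)%:R : rat) <= n%:R ^+ k by rewrite -natrX ler_nat binom_le.
    exact: (ler_wpM2r (exprn_ge0 _ (ler0n _ n)) Hc).
  rewrite -exprMn -natrM; apply: lerXn2r; rewrite ?nnegrE ?ler0n // ler_nat //.
rewrite E1 E2.
have Hz : 0 <= C2 * qk k ^+ h by rewrite mulr_ge0 ?exprn_ge0 ?qk_ge0.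
exact: (ler_wpM2r Hz H3).
Qed.
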